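(* Let $\Gamma$ be a distance-regular graph with valency $k$ and diameter $3$. Then the second largest eigenvalue $\theta_1$ of $\Gamma$ satisfies $$\theta_1\geq \min\left\{\frac{a_1+\sqrt{a_1^2+4k}}{2},\ a_3\right\}.$$
   Context: A connected graph $\Gamma$ of diameter $D$ is distance-regular if there are integers $b_i,c_i$ ($0\le i\le D$) such that for any two vertices $x,y$ at distance $i$, exactly $c_i$ neighbours of $y$ are at distance $i-1$ from $x$ and exactly $b_i$ neighbours of $y$ are at distance $i+1$ from $x$. Then $\Gamma$ is regular of valency $k=b_0$, and $a_i:=k-b_i-c_i$. The eigenvalues of $\Gamma$ are those of its adjacency matrix; $\Gamma$ has exactly $D+1$ distinct eigenvalues $k=\theta_0>\theta_1>\dots>\theta_D$. *)

(* Defs.v *)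
From mathcomp Require Import all_boot all_order all_algebra.
Set Implicit Arguments. Unset Strict Implicit. Unset Printing Implicit Defensive.
Import Order.TTheory GRing.Theory Num.Theory.

Fixpoint ball (T : finType) (e : rel T) (n : nat) (x : T) : {set T} :=
  match n with
  | 0 => [set x]
  | n'.+1 => ball e n' x :|: [set y | [exists z in ball e n' x, e z y]]
  end.

(* graph distance: least n with y in ball e n x (meaningful when connected,
   in which case it is < #|T|) *)
Definition gdist (T : finType) (e : rel T) (x y : T) : nat :=
  find (fun n => y \in ball e n x) (iota 0 #|T|).

Definition distance_regular (T : finType) (e : rel T) (D : nat)
    (b c : nat -> nat) : Prop :=
  symmetric e /\ irreflexive e /\ (forall x y, connect e x y) /\
      (exists x y, gdist e x y = D) /\ (forall x y, gdist e x y <= D) /\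
      c 0 = 0 /\
      (forall x y, let i := gdist e x y in
        #|[set z | e y z && (gdist e x z == i.+1)]| = b i /\
        (0 < i -> #|[set z | e y z && (gdist e x z == i.-1)]| = c i)).

Definition valency (b : nat -> nat) : nat := b 0.
Definition inter_a (b c : nat -> nat) (i : nat) : nat := b 0 - b i - c i.

Local Open Scope ring_scope.

Definition adjmx (R : nzRingType) (T : finType) (e : rel T) : 'M[R]_#|T| :=
  \matrix_(i, j) (e (enum_val i) (enum_val j))%:R.

Definition second_largest_eigenvalue (R : realFieldType) (n : nat)
    (A : 'M[R]_n) (th1 : R) : Prop :=
  [/\ eigenvalue A th1,
      exists th0, eigenvalue A th0 /\ th1 < th0 &
      forall th th', eigenvalue A th -> eigenvalue A th' ->
        th1 < th -> th1 < th' -> th = th'].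

(* Main.v *)
Require Import Defs.
From mathcomp Require Import all_boot all_order all_algebra.
From mathcomp Require Import zify ring lra.
Set Implicit Arguments. Unset Strict Implicit.
Import Order.TTheory GRing.Theory Num.Theory.

Lemma find_le (p : pred nat) N n : p n -> find p (iota 0 N) <= n.
Proof.
move=> pn; case: (ltnP n N) => hn.
  rewrite leqNgt; apply/negP => /(before_find 0).
  by rewrite nth_iota // add0n pn.
by apply: leq_trans (find_size _ _) _; rewrite size_iota.
Qed.

Lemma gdist_le_size (T : finType) (e : rel T) x y : gdist e x y <= #|T|.
Proof. by rewrite /gdist; apply: leq_trans (find_size _ _) _; rewrite size_iota. Qed.

Lemma gdist_ball (T : finType) (e : rel T) x y n :
  y \in ball e n x -> gdist e x y <= n.
Proof. exact: find_le. Qed.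

Lemma ball_gdist (T : finType) (e : rel T) x y :
  gdist e x y < #|T| -> y \in ball e (gdist e x y) x.
Proof.
rewrite /gdist => h.
have hh : has (fun n => y \in ball e n x) (iota 0 #|T|).
  by rewrite has_find size_iota.
by have := nth_find 0 hh; rewrite nth_iota ?add0n.
Qed.

Lemma ball_step (T : finType) (e : rel T) x y z n :
  y \in ball e n x -> e y z -> z \in ball e n.+1 x.
Proof.
move=> hy hz; rewrite /= in_setU in_set; apply/orP; right.
by apply/existsP; exists y; rewrite hy hz.
Qed.

Lemma gdist_edge (T : finType) (e : rel T) x y z :
  e y z -> gdist e x z <= (gdist e x y).+1.
Proof.
move=> ez; case: (ltnP (gdist e x y) #|T|) => h.
  by apply: gdist_ball; apply: ball_step (ball_gdist h) ez.
by apply: leq_trans (gdist_le_size e x z) _; apply: leq_trans h (leqnSn _).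
Qed.

Lemma gdist0 (T : finType) (e : rel T) x : gdist e x x = 0.
Proof. by apply/eqP; rewrite -leqn0; apply: gdist_ball; rewrite /= in_set1. Qed.

Lemma gdist0_eq (T : finType) (e : rel T) x y : gdist e x y = 0 -> y = x.
Proof.
move=> h; have T0 : 0 < #|T| by apply/card_gt0P; exists x.
have := @ball_gdist _ e x y; rewrite h => /(_ T0).
by rewrite /= in_set1 => /eqP.
Qed.

Lemma gdist_adj (T : finType) (e : rel T) x y :
  irreflexive e -> e x y -> gdist e x y = 1.
Proof.
move=> irr exy; have := gdist_edge x exy; rewrite gdist0.
case E: (gdist e x y) => [|[|n]] // _.
by move: exy; rewrite (gdist0_eq E) irr.
Qed.

Lemma path_ball (T : finType) (e : rel T) x p :
  path e x p -> last x p \in ball e (size p) x.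
Proof.
elim/last_ind: p => [|p z IH]; first by rewrite /= in_set1.
rewrite rcons_path => /andP[pp ez]; rewrite last_rcons size_rcons.
exact: ball_step (IH pp) ez.
Qed.

Lemma connect_gdist (T : finType) (e : rel T) x y :
  connect e x y -> gdist e x y < #|T|.
Proof.
move/connectP => [p pth ->]; case: (shortenP pth) => p' pth' up' _.
apply: leq_ltn_trans (gdist_ball (path_ball pth')) _.
by move/card_uniqP: up' => /= h; have := max_card (mem (x :: p')); rewrite h.
Qed.

Lemma gdist_pred (T : finType) (e : rel T) x y n :
  gdist e x y = n.+1 -> n.+1 < #|T| -> exists2 z, e z y & gdist e x z = n.
Proof.
move=> h hT; have := @ball_gdist _ e x y; rewrite h => /(_ hT).
rewrite /= in_setU in_set => /orP[hb | /existsP[z /andP[hz ezy]]].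
  by have := gdist_ball hb; rewrite h ltnn.
exists z => //; apply/eqP; rewrite eqn_leq gdist_ball //=.
by have := gdist_edge x ezy; rewrite h ltnS.
Qed.

Lemma three_cases (i j : nat) : j <= i.+1 -> i <= j.+1 -> (i = 0 -> j <> 0) ->
  (j == i.+1) + (j == i.-1) + ((j == i) && (0 < i)) = 1 /\
  forall (R : nzRingType) (f : nat -> R),
   (f j = f i.+1 *+ (j == i.+1) + f i.-1 *+ (j == i.-1)
         + f i *+ ((j == i) && (0 < i)%N))%R.
Proof.
move=> h1 h2 h3.
have [->|[[-> i0]|[-> i0]]] : j = i.+1 \/ (j = i.-1 /\ 0 < i) \/ (j = i /\ 0 < i) by lia.
- rewrite eqxx (_ : (i.+1 == i.-1) = false); last by apply/eqP; lia.
  rewrite (_ : (i.+1 == i) = false); last by apply/eqP; lia.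
  by split => // R f; rewrite /= !mulr0n !addr0.
- rewrite eqxx (_ : (i.-1 == i.+1) = false); last by apply/eqP; lia.
  rewrite (_ : (i.-1 == i) = false); last by apply/eqP; lia.
  by split => // R f; rewrite /= !mulr0n !addr0 add0r.
- rewrite eqxx i0 (_ : (i == i.+1) = false); last by apply/eqP; lia.
  rewrite (_ : (i == i.-1) = false); last by apply/eqP; lia.
  by split => // R f; rewrite /= !mulr0n !add0r.
Qed.

Lemma card_sum (T : finType) (A : {set T}) : #|A| = \sum_(t : T) (t \in A : nat).
Proof. by rewrite -sum1_card big_mkcond /=; apply: eq_bigr => t _; case: (t \in A). Qed.

Lemma adj_sum (R : nzRingType) (T : finType) (e : rel T) (f : nat -> R) x w :
  symmetric e -> irreflexive e ->
  let i := gdist e x w in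
  let A := [set t | e w t && (gdist e x t == i.+1)] in
  let B := [set t | e w t && (gdist e x t == i.-1)] in
  let C := [set t | e w t && ((gdist e x t == i) && (0 < i)%N)] in
  (#|[set t | e w t]| = #|A| + #|B| + #|C|)%N /\
  (\sum_(t : T) f (gdist e x t) * (e t w)%:R
     = f i.+1 *+ #|A| + f i.-1 *+ #|B| + f i *+ #|C|)%R.
Proof.
move=> sym irr i A B C.
have tc : forall t, e w t -> let j := gdist e x t in
  (j == i.+1) + (j == i.-1) + ((j == i) && (0 < i)) = 1 /\
  forall (R : nzRingType) (f : nat -> R),
   (f j = f i.+1 *+ (j == i.+1) + f i.-1 *+ (j == i.-1)
         + f i *+ ((j == i) && (0 < i)%N))%R.
  move=> t ewt j; apply: three_cases.
  - exact: gdist_edge.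
  - by apply: gdist_edge; rewrite sym.
  - move=> i0 j0; move: ewt; rewrite /i in i0; rewrite /j in j0.
    by rewrite (gdist0_eq i0) (gdist0_eq j0) irr.
split.
  rewrite !card_sum -!big_split /=; apply: eq_bigr => t _.
  rewrite !inE; case ewt: (e w t) => //=.
  by rewrite (tc t ewt).1.
rewrite (eq_bigr (fun t => f i.+1 *+ (t \in A) + f i.-1 *+ (t \in B)
    + f i *+ (t \in C)))%R; last first.
  move=> t _; rewrite !inE sym; case ewt: (e w t) => /=.
    by rewrite mulr1 -(tc t ewt).2.
  by rewrite mulr0 !mulr0n !addr0.
by rewrite !big_split /= !sumrMnr -!card_sum.
Qed.

Local Open Scope ring_scope.
Definition D4f (R : rcfType) (K a1 a2 a3 b1 b2 c2 c3 x : R) : R :=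
  (x - a3) * ((x - a2) * (x ^+ 2 - a1 * x - K) - b1 * c2 * x)
  - b2 * c3 * (x ^+ 2 - a1 * x - K).

Lemma real_part (R : rcfType) (K a1 a2 a3 b1 b2 c2 c3 th1 : R) :
  0 < K -> 0 < b1 -> 0 < b2 -> 0 < c2 -> 0 < c3 -> 0 <= a1 -> 0 <= a3 ->
  a1 = K - b1 - 1 -> a2 = K - b2 - c2 -> a3 = K - c3 ->
  th1 < (a1 + Num.sqrt (a1 ^+ 2 + 4 * K)) / 2 -> th1 < a3 ->
  exists xi, [/\ th1 < xi, xi < K & D4f K a1 a2 a3 b1 b2 c2 c3 xi = 0].
Proof.
move=> K0 b10 b20 c20 c30 a10 a30 ea1 ea2 ea3 hr ha3.
set s := Num.sqrt _ in hr.
have s0 : 0 <= s by exact: sqrtr_ge0.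
have s2 : s ^+ 2 = a1 ^+ 2 + 4 * K by rewrite sqr_sqrtr //; nra.
set r := (a1 + s) / 2 in hr.
have sa1 : a1 <= s by nra.
have P2fac : forall x, x ^+ 2 - a1 * x - K = (x - r) * (x - (a1 - s) / 2).
  have eK : K = (s ^+ 2 - a1 ^+ 2) / 4 by rewrite s2; field.
  by move=> x; rewrite /r eK; field.
have P2le : forall x, 0 <= x -> x <= r -> x ^+ 2 - a1 * x - K <= 0.
  move=> x x0 xr; rewrite P2fac; nra.
have r0 : 0 <= r by rewrite /r; lra.
have a3K : a3 < K by lra.
have key : exists m, [/\ th1 < m, m < K & 0 <= D4f K a1 a2 a3 b1 b2 c2 c3 m].
  have [ra3|a3r] := lerP r a3.
    exists r; split => //; first lra.
    rewrite /D4f P2fac subrr !mul0r !mulr0 ?subr0 ?sub0r.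
    rewrite mulrN -mulNr; apply: mulr_ge0; first lra.
    by apply: mulr_ge0 => //; apply: mulr_ge0; lra.
  exists a3; split => //.
  rewrite /D4f subrr mul0r sub0r oppr_ge0.
  apply: mulr_ge0_le0; first by apply: mulr_ge0; lra.
  exact: P2le a3 a30 (ltW a3r).
have [m [thm mK Dm]] := key.
pose Q : {poly R} := ('X - (a2 - c3)%:P) * ('X^2 - a1 *: 'X - K%:P)
   + (c2 * c3)%:P + (c2 * (c3 - b1)) *: 'X.
have QE : forall x, Q.[x] = (x - (a2 - c3)) * (x ^+ 2 - a1 * x - K)
   + c2 * c3 + c2 * (c3 - b1) * x.
  by move=> x; rewrite /Q !hornerE.
have DQ : forall x, D4f K a1 a2 a3 b1 b2 c2 c3 x = (x - K) * Q.[x].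
  by move=> x; rewrite QE /D4f ea3 ea2 ea1; ring.
have QK : 0 < Q.[K].
  rewrite QE ea2 ea1.
  have -> : (K - (K - b2 - c2 - c3)) * (K ^+ 2 - (K - b1 - 1) * K - K)
     + c2 * c3 + c2 * (c3 - b1) * K = K * b1 * (b2 + c3) + c2 * c3 * (1 + K)
    by ring.
  have h1 : 0 < K * b1 * (b2 + c3) by rewrite !mulr_gt0 // addr_gt0.
  have h2 : 0 < c2 * c3 * (1 + K) by rewrite !mulr_gt0 // addr_gt0.
  lra.
have Qm : Q.[m] <= 0.
  rewrite leNgt; apply/negP => Qm0.
  have : D4f K a1 a2 a3 b1 b2 c2 c3 m < 0 by rewrite DQ; nra.
  lra.
have hQ : Q.[m] <= 0 <= Q.[K] by rewrite Qm ltW.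
have [xi /andP[mxi xiK] rt] := poly_ivt (ltW mK) hQ.
have Qxi : Q.[xi] = 0 by apply/eqP.
exists xi; split.
- lra.
- rewrite lt_neqAle xiK andbT; apply/eqP => exK.
  by move: QK; rewrite -exK Qxi ltxx.
- by rewrite DQ Qxi mulr0.
Qed.

Lemma reidx (R : nzRingType) (T : finType) (F : T -> R) :
  \sum_(k < #|T|) F (enum_val k) = \sum_(t : T) F t.
Proof. by rewrite -big_enum_val. Qed.

Theorem lemma6 (R : rcfType) (T : finType) (e : rel T) (b c : nat -> nat)
    (th1 : R) :
  distance_regular e 3 b c ->
  second_largest_eigenvalue (adjmx R e) th1 ->
  Num.min (((inter_a b c 1)%:R + Num.sqrt ((inter_a b c 1)%:R ^+ 2
              + 4 * (valency b)%:R)) / 2)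
          (inter_a b c 3)%:R <= th1.
Proof.
move=> [sym [irr [conn [[x0 [y0 d3]] [dle [c0 cnt]]]]]] [eig1 _ uniq2].
have lt : forall x y, (gdist e x y < #|T|)%N.
  by move=> x y; exact: connect_gdist (conn x y).
have deg : forall w, #|[set t | e w t]| = b 0.
  move=> w; have := (cnt w w).1; rewrite /= gdist0 => <-.
  apply: eq_card => t; rewrite !inE; case ewt: (e w t) => //=.
  by rewrite gdist_adj.
have cntA : forall x w,
    #|[set t | e w t && (gdist e x t == (gdist e x w).+1)]| = b (gdist e x w).
  by move=> x w; exact: (cnt x w).1.
have cntB : forall x w,
    #|[set t | e w t && (gdist e x t == (gdist e x w).-1)]| = c (gdist e x w).
  move=> x w; case E: (gdist e x w) => [|i].
    rewrite c0; apply/eqP; rewrite cards_eq0; apply/eqP/setP => t.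
    rewrite !inE; case ewt: (e w t) => //=; apply/negP => /eqP t0.
    by move: ewt; rewrite (gdist0_eq E) (gdist0_eq t0) irr.
  by have := (cnt x w).2; rewrite /= E; apply.
have cardC : forall x w,
    #|[set t | e w t && ((gdist e x t == gdist e x w) && (0 < gdist e x w)%N)]|
    = inter_a b c (gdist e x w).
  move=> x w; have [h _] := adj_sum (fun _ => 0 : R) x w sym irr.
  move: h; rewrite /= deg cntA cntB /inter_a => ->.
  by rewrite -addnA addKn addKn.
have bound : forall x w, (b (gdist e x w) + c (gdist e x w) <= b 0)%N.
  move=> x w; have [h _] := adj_sum (fun _ => 0 : R) x w sym irr.
  by move: h; rewrite /= deg cntA cntB => ->; exact: leq_addr.
have l3 := lt x0 y0; rewrite d3 in l3.
have [y2 e20 d2] := gdist_pred d3 l3.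
have l2 := lt x0 y2; rewrite d2 in l2.
have [y1 e12 d1] := gdist_pred d2 l2.
have l1 := lt x0 y1; rewrite d1 in l1.
have [z e01 dz] := gdist_pred d1 l1.
have zx := gdist0_eq dz; subst z.
have hb0 : (0 < b 0)%N.
  rewrite -(deg x0); apply/card_gt0P; exists y1; by rewrite inE.
have hb1 : (0 < b 1)%N.
  have := cntA x0 y1; rewrite d1 => <-; apply/card_gt0P; exists y2.
  by rewrite inE e12 d2.
have hb2 : (0 < b 2)%N.
  have := cntA x0 y2; rewrite d2 => <-; apply/card_gt0P; exists y0.
  by rewrite inE e20 d3.
have hc2 : (0 < c 2)%N.
  have := cntB x0 y2; rewrite d2 => <-; apply/card_gt0P; exists y1.
  by rewrite inE sym e12 d1.
have hc3 : (0 < c 3)%N.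
  have := cntB x0 y0; rewrite d3 => <-; apply/card_gt0P; exists y2.
  by rewrite inE sym e20 d2.
have hc1 : c 1 = 1%N.
  have := cntB x0 y1; rewrite d1 => <-.
  rewrite (_ : [set t | _] = [set x0]) ?cards1 //; apply/setP => t.
  rewrite !inE; case: (t =P x0) => [->|ne]; first by rewrite gdist0 sym e01.
  rewrite (_ : (gdist e x0 t == 0%N) = false) ?andbF //.
  by apply/eqP => /gdist0_eq.
have hb3 : b 3 = 0%N.
  have := cntA x0 y0; rewrite d3 => <-.
  apply/eqP; rewrite cards_eq0; apply/eqP/setP => t; rewrite !inE.
  rewrite (_ : (gdist e x0 t == 4) = false) ?andbF //.
  by apply/eqP => h; have := dle x0 t; rewrite h.
have bd1 := bound x0 y1; rewrite d1 in bd1.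
have bd2 := bound x0 y2; rewrite d2 in bd2.
have bd3 := bound x0 y0; rewrite d3 in bd3.
set K : R := (b 0)%:R.
set a1 : R := (inter_a b c 1)%:R.
set a2 : R := (inter_a b c 2)%:R.
set a3 : R := (inter_a b c 3)%:R.
set B1 : R := (b 1)%:R.
set B2 : R := (b 2)%:R.
set C2 : R := (c 2)%:R.
set C3 : R := (c 3)%:R.
have ea1 : a1 = K - B1 - 1.
  rewrite /a1 /inter_a natrB ?natrB ?hc1 //; move: bd1; rewrite hc1; lia.
have ea2 : a2 = K - B2 - C2.
  by rewrite /a2 /inter_a natrB ?natrB //; lia.
have ea3 : a3 = K - C3.
  rewrite /a3 /inter_a hb3 subn0 natrB //; move: bd3; rewrite hb3; lia.
have K0 : 0 < K by rewrite ltr0n.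
have B10 : 0 < B1 by rewrite ltr0n.
have B20 : 0 < B2 by rewrite ltr0n.
have eig : forall xi, D4f K a1 a2 a3 B1 B2 C2 C3 xi = 0 ->
    eigenvalue (adjmx R e) xi.
  move=> xi Dxi.
  pose D2 := xi ^+ 2 - a1 * xi - K.
  pose D3 := (xi - a2) * D2 - B1 * C2 * xi.
  pose f n := match n with 0 => 1 | 1 => xi / K | 2 => D2 / (K * B1)
    | 3 => D3 / (K * B1 * B2) | _ => 0 end.
  apply/eigenvalueP; exists (\row_j f (gdist e x0 (enum_val j))).
    apply/rowP => j; rewrite !mxE.
    under eq_bigr do rewrite !mxE.
    rewrite (reidx (fun t => f (gdist e x0 t) * (e t (enum_val j))%:R)).
    have [_ ->] := adj_sum f x0 (enum_val j) sym irr.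
    rewrite cntA cntB cardC.
    move: (dle x0 (enum_val j)); case: (gdist e x0 (enum_val j)) =>
      [|[|[|[|i]]]] //= _.
    - rewrite /inter_a subnn c0 !mulr0n !addr0 -mulr_natr -/K.
      by rewrite /f divfK ?mulr1 // gt_eqF.
    - rewrite hc1 -(mulr_natr _ (b 1)) -(mulr_natr _ (inter_a b c 1)) -/a1 -/B1 /f /D2.
      by field; rewrite !pnatr_eq0 -!lt0n hb0 hb1.
    - rewrite -(mulr_natr _ (b 2)) -(mulr_natr _ (c 2)) -(mulr_natr _ (inter_a b c 2)) -/a2 -/B2 -/C2 /f /D3.
      by field; rewrite !pnatr_eq0 -!lt0n hb0 hb1 hb2.
    - rewrite hb3 mulr0n add0r -(mulr_natr _ (c 3)) -(mulr_natr _ (inter_a b c 3)) -/a3 -/C3 /f.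
      move: Dxi; rewrite /D4f -/D2 -/D3 => Dxi.
      apply/eqP; rewrite -subr_eq0; apply/eqP.
      rewrite (_ : _ - _ = - D4f K a1 a2 a3 B1 B2 C2 C3 xi / (K * B1 * B2)).
        by rewrite /D4f -/D2 -/D3 Dxi oppr0 mul0r.
      by rewrite /D4f -/D2 -/D3; field; rewrite !pnatr_eq0 -!lt0n hb0 hb1 hb2.
  apply/eqP => /rowP /(_ (enum_rank x0)); rewrite !mxE enum_rankK gdist0 /=.
  by apply/eqP; rewrite oner_neq0.
rewrite leNgt; apply/negP; rewrite lt_min => /andP[hr ha3].
have C20 : 0 < C2 by rewrite ltr0n.
have C30 : 0 < C3 by rewrite ltr0n.
have [xi [thxi xiK Dxi]] := real_part K0 B10 B20 C20 C30
  (ler0n _ _) (ler0n _ _) ea1 ea2 ea3 hr ha3.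
have DK : D4f K a1 a2 a3 B1 B2 C2 C3 K = 0.
  by rewrite /D4f ea3 ea2 ea1; ring.
have := uniq2 xi K (eig xi Dxi) (eig K DK) thxi (lt_trans thxi xiK).
by move=> exK; move: xiK; rewrite exK ltxx.
Qed.
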